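(* Let $G$ be an arbitrary group and let $S=\bigoplus_{g\in G}S_g$ be an epsilon-strongly $G$-graded ring with principal component $R=S_e$. If $\mathrm{Supp}(S)$ is finite, then $S$ is finitely generated both as a left $R$-module and as a right $R$-module.
   Context: All rings are associative with multiplicative identity $1\neq 0$. A ring $S$ is $G$-graded if $S=\bigoplus_{g\in G}S_g$ for additive subgroups $S_g$ with $S_gS_h\subseteq S_{gh}$ for all $g,h\in G$; $S_e$ is the principal component, and $\mathrm{Supp}(S)=\{g\in G: S_g\neq\{0\}\}$. $S$ is epsilon-strongly $G$-graded if (a) $S_gS_{g^{-1}}S_g=S_g$ for all $g\in G$, and (b) for each $g\in G$ the ideal $S_gS_{g^{-1}}$ of $S_e$ has a multiplicative identity. *)

(* Defs.v *)
From HB Require Import structures.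
From mathcomp Require Import all_boot all_order all_algebra.
Set Implicit Arguments. Unset Strict Implicit. Unset Printing Implicit Defensive.
Import GRing.Theory.
Local Open Scope ring_scope.

Record group := Group {
  gcar :> Type;
  gmul : gcar -> gcar -> gcar;
  ginv : gcar -> gcar;
  gid : gcar;
  gmulA : forall x y z, gmul x (gmul y z) = gmul (gmul x y) z;
  gmul1g : forall x, gmul gid x = x;
  gmulg1 : forall x, gmul x gid = x;
  gmulVg : forall x, gmul (ginv x) x = gid;
  gmulgV : forall x, gmul x (ginv x) = gid
}.

Section Graded.
Variables (G : group) (S : nzRingType).

Definition additive_subgroup (A : S -> Prop) : Prop :=
  A 0 /\ (forall x y, A x -> A y -> A (x - y)).

Definition setmul (A B : S -> Prop) : S -> Prop :=
  fun s => exists n (a b : 'I_n -> S),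
    (forall i, A (a i) /\ B (b i)) /\ s = \sum_(i < n) a i * b i.

Definition is_graded (Sg : G -> S -> Prop) : Prop :=
  [/\ (forall g, additive_subgroup (Sg g)),
      (forall s, exists n (gs : 'I_n -> G) (x : 'I_n -> S),
          injective gs /\ (forall i, Sg (gs i) (x i)) /\ s = \sum_(i < n) x i),
      (forall n (gs : 'I_n -> G) (x : 'I_n -> S),
          injective gs -> (forall i, Sg (gs i) (x i)) ->
          \sum_(i < n) x i = 0 -> forall i, x i = 0)
    & (forall g h x y, Sg g x -> Sg h y -> Sg (gmul g h) (x * y))].

Definition epsilon_strongly_graded (Sg : G -> S -> Prop) : Prop :=
  is_graded Sg /\
  (forall g, forall s, setmul (setmul (Sg g) (Sg (ginv g))) (Sg g) s <-> Sg g s) /\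
  (forall g, exists eps, setmul (Sg g) (Sg (ginv g)) eps /\
      forall x, setmul (Sg g) (Sg (ginv g)) x -> eps * x = x /\ x * eps = x).

Definition finite_support (Sg : G -> S -> Prop) : Prop :=
  exists n (gs : 'I_n -> G), forall g, (exists x, Sg g x /\ x <> 0) ->
    exists i, gs i = g.

Definition fg_left_module (R : S -> Prop) : Prop :=
  exists n (e : 'I_n -> S), forall s, exists r : 'I_n -> S,
    (forall i, R (r i)) /\ s = \sum_(i < n) r i * e i.

Definition fg_right_module (R : S -> Prop) : Prop :=
  exists n (e : 'I_n -> S), forall s, exists r : 'I_n -> S,
    (forall i, R (r i)) /\ s = \sum_(i < n) e i * r i.

End Graded.

(* Main.v *)
Require Import Defs.
From mathcomp Require Import all_boot all_order all_algebra.
Set Implicit Arguments. Unset Strict Implicit. Unset Printing Implicit Defensive.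
Import GRing.Theory.
Local Open Scope ring_scope.

Definition span (S : nzRingType) (f : S -> S -> S) (R : S -> Prop) n
  (E : 'I_n -> S) (x : S) :=
  exists r : 'I_n -> S, (forall i, R (r i)) /\ x = \sum_(i < n) f (r i) (E i).

Lemma split_l m n (a : 'I_m) : split (lshift n a) = inl a.
Proof. exact: (unsplitK (inl a)). Qed.
Lemma split_r m n (a : 'I_n) : split (rshift m a) = inr a.
Proof. exact: (unsplitK (inr a)). Qed.

Lemma combine (S : nzRingType) (f : S -> S -> S) (R : S -> Prop)
  (f0 : forall e, f 0 e = 0) (R0 : R 0) n (P : 'I_n -> S -> Prop) :
  (forall j, exists m (e : 'I_m -> S), forall x, P j x -> span f R e x) ->
  exists N (E : 'I_N -> S), forall j x, P j x -> span f R E x.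
Proof.
elim: n P => [|n IH] P H.
  by exists 0%N, (fun _ => 0); case.
have [N [E HE]] := IH (fun j => P (lift ord0 j)) (fun j => H _).
have [m [e He]] := H ord0.
exists (N + m)%N, (fun i => match split i with inl a => E a | inr b => e b end).
move=> j x; case: (unliftP ord0 j) => [j'|] -> Pjx.
  have [r [Rr ->]] := HE j' x Pjx.
  exists (fun i => match split i with inl a => r a | inr _ => 0 end); split.
    by move=> i; case: split.
  rewrite big_split_ord /=.
  rewrite [X in _ = _ + X]big1 ?addr0; last by move=> i _; rewrite split_r f0.
  by apply: eq_bigr => i _; rewrite split_l.
have [r [Rr ->]] := He x Pjx.
exists (fun i => match split i with inl _ => 0 | inr a => r a end); split.
  by move=> i; case: split.
rewrite big_split_ord /=.
rewrite [X in _ = X + _]big1 ?add0r; last by move=> i _; rewrite split_l f0.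
by apply: eq_bigr => i _; rewrite split_r.
Qed.

Lemma span_add (S : nzRingType) (f : S -> S -> S) (R : S -> Prop)
  (fD : forall a b e, f (a + b) e = f a e + f b e)
  (RD : forall a b, R a -> R b -> R (a + b)) n (E : 'I_n -> S) x y :
  span f R E x -> span f R E y -> span f R E (x + y).
Proof.
move=> [r [Rr ->]] [r' [Rr' ->]]; exists (fun i => r i + r' i); split.
  by move=> i; apply: RD.
by rewrite -big_split /=; apply: eq_bigr => i _; rewrite fD.
Qed.

Lemma ginvK (G : group) (g : G) : ginv (ginv g) = g.
Proof.
by rewrite -[LHS]gmulg1 -(gmulVg g) gmulA gmulVg gmul1g.
Qed.

Theorem proposition3p3 (G : group) (S : nzRingType) (Sg : G -> S -> Prop) :
  epsilon_strongly_graded Sg -> finite_support Sg ->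
  fg_left_module (Sg (gid G)) /\ fg_right_module (Sg (gid G)).
Proof.
move=> [[Sadd Sdec Sdir Smul] [Ha Hb]] [n [gs Hsupp]].
have R0 : Sg (gid G) 0 by case: (Sadd (gid G)).
have RD : forall a b, Sg (gid G) a -> Sg (gid G) b -> Sg (gid G) (a + b).
  move=> a b Ha' Hb'; have := Sadd (gid G); rewrite /additive_subgroup => -[_ Hs].
  by rewrite -[b]opprK -[- b]sub0r; apply: (Hs) => //; apply: (Hs).
have key : forall f : S -> S -> S, (forall e, f 0 e = 0) ->
    (forall a b e, f (a + b) e = f a e + f b e) ->
    (forall g, exists m (e : 'I_m -> S), forall x, Sg g x -> span f (Sg (gid G)) e x) ->
    exists N (E : 'I_N -> S), forall s, span f (Sg (gid G)) E s.
  move=> f f0 fD Hg.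
  have [N [E HE]] := combine (P := fun j => Sg (gs j)) f0 R0 (fun j => Hg (gs j)).
  exists N, E => s.
  have [k [gs' [x [inj [hom ->]]]]] := Sdec s.
  apply: (big_ind (span f (Sg (gid G)) E)).
  - by exists (fun _ => 0); split => //; rewrite big1.
  - by move=> a b; apply: span_add.
  move=> i _; case: (eqVneq (x i) 0) => [->|nz].
    by exists (fun _ => 0); split => //; rewrite big1.
  have [j Hj] := Hsupp (gs' i) (ex_intro _ (x i) (conj (hom i) (elimN eqP nz))).
  by apply: (HE j); rewrite Hj.
have lg : forall g, exists m (e : 'I_m -> S), forall x, Sg g x ->
    span (fun r e => r * e) (Sg (gid G)) e x.
  move=> g.
  have [eps [[m [u [v [Huv ->]]]] Heps]] := Hb (ginv g).
  exists m, v => x Hx; exists (fun i => x * u i); split.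
    by move=> i; rewrite -(gmulgV g); apply: Smul => //; case: (Huv i).
  transitivity (x * \sum_(i < m) u i * v i); last first.
    by rewrite mulr_sumr; apply: eq_bigr => i _; rewrite mulrA.
  have := (Ha g x).2 Hx => -[k [p [c [Hpc ->]]]].
  rewrite mulr_suml; apply: eq_bigr => i _.
  have [[k' [a [b [Hab Hp]]]] Hc] := Hpc i.
  rewrite Hp !mulr_suml; apply: eq_bigr => j _.
  have Hs : setmul (Sg (ginv g)) (Sg (ginv (ginv g))) (b j * c i).
    exists 1%N, (fun _ => b j), (fun _ => c i); split; last by rewrite big_ord1.
    by move=> _; rewrite ginvK; split => //; case: (Hab j).
  by rewrite -!mulrA [b j * (c i * _)]mulrA (Heps _ Hs).2.
have rg : forall g, exists m (e : 'I_m -> S), forall x, Sg g x ->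
    span (fun r e => e * r) (Sg (gid G)) e x.
  move=> g.
  have [eps [[m [u [v [Huv Heq]]]] Heps]] := Hb g.
  exists m, u => x Hx; exists (fun i => v i * x); split.
    by move=> i; rewrite -(gmulVg g); apply: Smul => //; case: (Huv i).
  transitivity (eps * x); last first.
    by rewrite Heq mulr_suml; apply: eq_bigr => i _; rewrite mulrA.
  have := (Ha g x).2 Hx => -[k [p [c [Hpc ->]]]].
  rewrite mulr_sumr; apply: eq_bigr => i _.
  have [Hp _] := Hpc i.
  by rewrite mulrA (Heps _ Hp).1.
split.
  have [N [E HE]] := key (fun r e => r * e) (fun e => mul0r e)
    (fun a b e => mulrDl a b e) lg.
  by exists N, E => s; exact: HE.
have [N [E HE]] := key (fun r e => e * r) (fun e => mulr0 e)
    (fun a b e => mulrDr e a b) rg.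
by exists N, E => s; exact: HE.
Qed.
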